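(* Let $K>0$ and let $\psi$ be a PTL formula over $\Sigma$ with operator depth $\mathrm{od}(\psi)\le K$. Then for all $u,v,s,t\in\Sigma^*$: $u(st)^Ksv\models\psi$ if and only if $u(st)^Kv\models\psi$.
   Context: PTL formulas over a finite alphabet $\Sigma$ are built from $\pi_a$ ($a\in\Sigma$), $\wedge$, $\neg$ and $\mathbf{P}$; for $w=w_1\cdots w_N$ and $n\in\{1,\dots,N+1\}$: $w,n\models\pi_a$ iff $n\le N$ and $w_n=a$; Boolean connectives as usual; $w,n\models\mathbf{P}\psi$ iff $w,m\models\psi$ for some $1\le m<n$. $w\models\psi$ means $w,|w|+1\models\psi$. The operator depth is defined by $\mathrm{od}(\pi_a)=0$, $\mathrm{od}(\psi_1\wedge\psi_2)=\max(\mathrm{od}(\psi_1),\mathrm{od}(\psi_2))$, $\mathrm{od}(\neg\psi)=\mathrm{od}(\psi)$, $\mathrm{od}(\mathbf{P}\psi)=\mathrm{od}(\psi)+1$. $(st)^K$ denotes the $K$-fold concatenation of $st$. *)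

(* Defs.v *)
From mathcomp Require Import all_boot.
Set Implicit Arguments. Unset Strict Implicit. Unset Printing Implicit Defensive.

Inductive ptl (Sigma : finType) : Type :=
| PiA : Sigma -> ptl Sigma
| AndF : ptl Sigma -> ptl Sigma -> ptl Sigma
| NotF : ptl Sigma -> ptl Sigma
| PastF : ptl Sigma -> ptl Sigma.

Fixpoint od (Sigma : finType) (f : ptl Sigma) : nat :=
  match f with
  | PiA _ => 0
  | AndF f1 f2 => maxn (od f1) (od f2)
  | NotF f1 => od f1
  | PastF f1 => (od f1).+1
  end.

(* Satisfaction w, n |= f, with positions 1-indexed, n in {1,...,|w|+1};
   letter w_n is nth (n-1) of w. *)
Fixpoint sat (Sigma : finType) (w : seq Sigma) (n : nat) (f : ptl Sigma) : Prop :=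
  match f with
  | PiA a => n <= size w /\ exists x0, nth x0 w n.-1 = a
  | AndF f1 f2 => sat w n f1 /\ sat w n f2
  | NotF f1 => ~ sat w n f1
  | PastF f1 => exists m, 1 <= m < n /\ sat w m f1
  end.

Definition models (Sigma : finType) (w : seq Sigma) (f : ptl Sigma) : Prop :=
  sat w (size w).+1 f.

Definition pow_seq (T : Type) (s : seq T) (K : nat) : seq T :=
  flatten (nseq K s).

(* Main.v *)
Require Import Defs.
From mathcomp Require Import all_boot.
From mathcomp Require Import zify.
Set Implicit Arguments. Unset Strict Implicit. Unset Printing Implicit Defensive.

Lemma cat_split (T : Type) (w y x1 x2 : seq T) (a : T) :
  w ++ y = x1 ++ a :: x2 ->
  (exists p, x1 = w ++ p /\ y = p ++ a :: x2) \/ (exists q, w = x1 ++ a :: q).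
Proof.
elim: w x1 => [|b w IH] x1 /=.
  by move=> E; left; exists x1.
case: x1 => [|c x1] /=.
  by case=> -> _; right; exists w.
case=> -> E; case: (IH _ E) => [[p [-> ->]]|[q ->]].
  by left; exists p.
by right; exists q.
Qed.

Lemma powS (T : Type) (w : seq T) n : pow_seq w n.+1 = w ++ pow_seq w n.
Proof. by []. Qed.

Lemma powSr (T : Type) (w : seq T) n : pow_seq w n.+1 = pow_seq w n ++ w.
Proof.
elim: n => [|n IH]; first by rewrite /pow_seq /= cats0.
by rewrite [LHS]powS [in LHS]IH catA.
Qed.

Lemma pow_add (T : Type) (w : seq T) i j : pow_seq w (i + j) = pow_seq w i ++ pow_seq w j.
Proof. elim: i => [|i IH] //. by rewrite addSn !powS IH catA. Qed.

Lemma decomp (T : Type) (w : seq T) n x1 a x2 r r0 :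
  w = r ++ r0 -> pow_seq w n ++ r = x1 ++ a :: x2 ->
  exists i r1 r2, x1 = pow_seq w i ++ r1 /\ w = r1 ++ a :: r2.
Proof.
move=> Hw; elim: n x1 => [|n IH] x1 /=.
  move=> E; exists 0, x1, (x2 ++ r0); split => //.
  by rewrite Hw /= E -catA.
rewrite powS -catA => E; case: (cat_split E) => [[p [-> Ep]]|[q Eq]].
  have [i [r1 [r2 [Hp Hw2]]]] := IH _ Ep.
  by exists i.+1, r1, r2; rewrite Hp powS catA.
by exists 0, x1, q.
Qed.

Lemma match_pos (T : Type) (w : seq T) j m r r1 a r2 :
  j < m -> w = r1 ++ a :: r2 ->
  exists y2, pow_seq w m ++ r = (pow_seq w j ++ r1) ++ a :: y2.
Proof.
move=> Hjm Hw.
have [d ->] : exists d, m = j + d.+1 by exists (m - j).-1; lia.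
exists (r2 ++ pow_seq w d ++ r).
rewrite pow_add powS -!catA; congr (_ ++ _).
have -> : r1 ++ a :: r2 ++ pow_seq w d ++ r = (r1 ++ a :: r2) ++ pow_seq w d ++ r by rewrite -catA.
by rewrite -Hw.
Qed.

Fixpoint G (T : Type) (k : nat) (x y : seq T) : Prop :=
  match k with
  | 0 => True
  | k'.+1 =>
    (forall x1 a x2, x = x1 ++ a :: x2 -> exists y1 y2, y = y1 ++ a :: y2 /\ G k' x1 y1) /\
    (forall y1 a y2, y = y1 ++ a :: y2 -> exists x1 x2, x = x1 ++ a :: x2 /\ G k' x1 y1)
  end.

Lemma G_refl (T : Type) k (x : seq T) : G k x x.
Proof.
elim: k x => [|k IH] x //=; split.
  by move=> x1 a x2 E; exists x1, x2.
by move=> x1 a x2 E; exists x1, x2.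
Qed.

Lemma G_mono (T : Type) k (x y : seq T) : G k.+1 x y -> G k x y.
Proof.
elim: k x y => [|k IH] x y //= [Hf Hb]; split.
  move=> x1 a x2 E; have [y1 [y2 [Ey /IH Hg]]] := Hf _ _ _ E.
  by exists y1, y2.
move=> y1 a y2 E; have [x1 [x2 [Ex /IH Hg]]] := Hb _ _ _ E.
by exists x1, x2.
Qed.

Lemma G_catr (T : Type) k (x y v : seq T) : G k x y -> G k (x ++ v) (y ++ v).
Proof.
elim: k x y v => [|k IH] x y v //= H; have Hk := G_mono H; move: H => /= [Hf Hb]; split.
  move=> x1 a x2 E; case: (cat_split E) => [[p [-> Ep]]|[q Eq]].
    exists (y ++ p), x2; split; first by rewrite Ep catA.
    exact: IH Hk.
  have [y1 [y2 [Ey Hg]]] := Hf _ _ _ Eq.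
  by exists y1, (y2 ++ v); rewrite Ey -catA cat_cons.
move=> y1 a y2 E; case: (cat_split E) => [[p [-> Ep]]|[q Eq]].
  exists (x ++ p), y2; split; first by rewrite Ep catA.
  exact: IH Hk.
have [x1 [x2 [Ex Hg]]] := Hb _ _ _ Eq.
by exists x1, (x2 ++ v); rewrite Ex -catA cat_cons.
Qed.

Lemma G_catl (T : Type) k (u x y : seq T) : G k x y -> G k (u ++ x) (u ++ y).
Proof.
elim: k x y => [|k IH] x y //= [Hf Hb]; split.
  move=> x1 a x2 E; case: (cat_split E) => [[p [-> Ep]]|[q Eq]].
    have [y1 [y2 [Ey Hg]]] := Hf _ _ _ Ep.
    exists (u ++ y1), y2; split; first by rewrite Ey catA.
    exact: IH Hg.
  by exists x1, (q ++ y); rewrite Eq -catA cat_cons; split => //; apply: G_refl.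
move=> y1 a y2 E; case: (cat_split E) => [[p [-> Ep]]|[q Eq]].
  have [x1 [x2 [Ex Hg]]] := Hb _ _ _ Ep.
  exists (u ++ x1), x2; split; first by rewrite Ex catA.
  exact: IH Hg.
by exists y1, (q ++ x); rewrite Eq -catA cat_cons; split => //; apply: G_refl.
Qed.

Lemma D (T : Type) (w : seq T) k : forall n m r r0, w = r ++ r0 -> k <= n -> k <= m ->
  G k (pow_seq w n ++ r) (pow_seq w m ++ r).
Proof.
elim: k => [|k IH] n m r r0 Hw Hn Hm //=; split.
  move=> x1 a x2 E; have [i [r1 [r2 [-> Hw1]]]] := decomp Hw E.
  case: (leqP k i) => Hki.
    have [y2 Ey] := match_pos r Hm Hw1.
    by exists (pow_seq w k ++ r1), y2; split => //; apply: (IH _ _ _ _ Hw1).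
  have [y2 Ey] := match_pos r (leq_trans Hki (ltnW Hm)) Hw1.
  by exists (pow_seq w i ++ r1), y2; split => //; apply: G_refl.
move=> x1 a x2 E; have [i [r1 [r2 [-> Hw1]]]] := decomp Hw E.
case: (leqP k i) => Hki.
  have [y2 Ey] := match_pos r Hn Hw1.
  by exists (pow_seq w k ++ r1), y2; split => //; apply: (IH _ _ _ _ Hw1).
have [y2 Ey] := match_pos r (leq_trans Hki (ltnW Hn)) Hw1.
by exists (pow_seq w i ++ r1), y2; split => //; apply: G_refl.
Qed.

Lemma main_G (T : Type) (s t : seq T) K :
  G K.+1 (pow_seq (s ++ t) K.+1 ++ s) (pow_seq (s ++ t) K.+1).
Proof.
rewrite /=; split.
  move=> x1 a x2 E; case: (cat_split E) => [[p [-> Ep]]|[q Eq]].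
    exists (pow_seq (s ++ t) K ++ p), (x2 ++ t); split.
      by rewrite powSr Ep -!catA cat_cons.
    apply: (D (r0 := a :: x2 ++ t)) => //.
    by rewrite Ep -catA cat_cons.
  by exists x1, q; split => //; apply: G_refl.
move=> y1 a y2 E; exists y1, (y2 ++ s); split; last exact: G_refl.
by rewrite E -catA cat_cons.
Qed.

Lemma split_at (T : Type) (x : seq T) i : i < size x ->
  exists x1 a x2, x = x1 ++ a :: x2 /\ size x1 = i.
Proof.
elim: x i => [|b x IH] [|i] //= H.
  by exists [::], b, x.
have [x1 [a [x2 [E S]]]] := IH i H.
by exists (b :: x1), a, x2; rewrite E /= S.
Qed.

Lemma pi_aux (Sigma : finType) (x z : seq Sigma) (a : Sigma) :
  ((size x).+1 <= size (x ++ z) /\ exists x0, nth x0 (x ++ z) (size x) = a) <->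
  take 1 z = [:: a].
Proof.
have E : forall x0, nth x0 (x ++ z) (size x) = nth x0 z 0.
  by move=> x0; rewrite nth_cat ltnn subnn.
rewrite size_cat; split.
  case=> H [x0]; rewrite E; case: z {E} H => [|b z] /=.
    by rewrite addn0 ltnn.
  by rewrite take0 => _ ->.
case: z E => [|b z] //= E; rewrite take0 => -[<-]; split.
  by rewrite addnS ltnS leq_addr.
by exists b; rewrite E.
Qed.

Lemma sem (Sigma : finType) (phi : ptl Sigma) : forall k (x y z1 z2 : seq Sigma),
  G k x y -> od phi <= k -> take 1 z1 = take 1 z2 ->
  (sat (x ++ z1) (size x).+1 phi <-> sat (y ++ z2) (size y).+1 phi).
Proof.
elim: phi => [a|f1 IH1 f2 IH2|f IH|f IH] k x y z1 z2 HG Hod Hz /=.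
- by rewrite (pi_aux x z1 a) (pi_aux y z2 a) Hz.
- move: Hod; rewrite geq_max => /andP [H1 H2].
  by rewrite (IH1 _ _ _ _ _ HG H1 Hz) (IH2 _ _ _ _ _ HG H2 Hz).
- by rewrite (IH _ _ _ _ _ HG Hod Hz).
- case: k HG Hod => [//|k] /= [Hf Hb]; rewrite ltnS => Hod; split.
    move=> [m [Hm Hs]].
    have [x1 [a [x2 [Ex Sx]]]] := @split_at _ x m.-1 ltac:(lia).
    have [y1 [y2 [Ey Hg]]] := Hf _ _ _ Ex.
    exists (size y1).+1; split; first by rewrite Ey size_cat /=; lia.
    have Em : m = (size x1).+1 by lia.
    move: Hs; rewrite Em Ex Ey -!catA !cat_cons.
    by rewrite (IH _ _ _ (a :: x2 ++ z1) (a :: y2 ++ z2) Hg Hod) //= !take0.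
  move=> [m [Hm Hs]].
  have [y1 [a [y2 [Ey Sy]]]] := @split_at _ y m.-1 ltac:(lia).
  have [x1 [x2 [Ex Hg]]] := Hb _ _ _ Ey.
  exists (size x1).+1; split; first by rewrite Ex size_cat /=; lia.
  have Em : m = (size y1).+1 by lia.
  move: Hs; rewrite Em Ex Ey -!catA !cat_cons.
  by rewrite (IH _ _ _ (a :: x2 ++ z1) (a :: y2 ++ z2) Hg Hod) //= !take0.
Qed.

Theorem mainTheorem11 (Sigma : finType) (K : nat) (psi : ptl Sigma)
  (u v s t : seq Sigma) :
  0 < K -> od psi <= K ->
  (models (u ++ pow_seq (s ++ t) K ++ s ++ v) psi <->
   models (u ++ pow_seq (s ++ t) K ++ v) psi).
Proof.
case: K => [//|K] _ Hod.
have HG : G K.+1 (u ++ ((pow_seq (s ++ t) K.+1 ++ s) ++ v))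
                 (u ++ (pow_seq (s ++ t) K.+1 ++ v)).
  by apply: G_catl; apply: G_catr; apply: main_G.
have := sem HG Hod (z1 := [::]) (z2 := [::]) erefl.
by rewrite !cats0 /models -catA.
Qed.
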